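(* The real flag manifold $\mathbb F_\Theta$ of type $C_4$ with $\Theta=\{\lambda_1-\lambda_2,\lambda_3-\lambda_4\}$ does not admit $K$-invariant almost complex structures.
   Context: $\mathfrak g=\mathfrak{sp}(4,\mathbb R)$ (split real form of type $C_4$) with Iwasawa decomposition $\mathfrak g=\mathfrak k\oplus\mathfrak a\oplus\mathfrak n$, roots $\pm\lambda_i\pm\lambda_j$ ($i<j$), $\pm2\lambda_i$, simple roots $\lambda_1-\lambda_2,\lambda_2-\lambda_3,\lambda_3-\lambda_4,2\lambda_4$. For $\Theta$ a set of simple roots, $\mathfrak p_\Theta=\mathfrak a\oplus\sum_{\alpha>0}\mathfrak g_\alpha\oplus\sum_{\alpha\in\langle\Theta\rangle^-}\mathfrak g_\alpha$ where $\langle\Theta\rangle^-$ are the negative roots generated by $\Theta$; $G$ is the inner automorphism group of $\mathfrak g$, $K$ its maximal compact subgroup, $P_\Theta$ the normalizer of $\mathfrak p_\Theta$ in $G$, $K_\Theta=K\cap P_\Theta$, $\mathbb F_\Theta=G/P_\Theta=K/K_\Theta$. $K$-invariant means invariant under the left action of $K$. *)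

(* Defs.v *)
From HB Require Import structures.
From mathcomp Require Import all_boot all_order all_algebra.
From mathcomp Require Import Rstruct.
From Stdlib Require List.
Set Implicit Arguments. Unset Strict Implicit. Unset Printing Implicit Defensive.
Import Order.TTheory GRing.Theory Num.Theory.
Local Open Scope ring_scope.

Notation RR := Rdefinitions.R.
Notation mat := 'M[RR]_8.

Definition Om : mat := block_mx (0 : 'M[RR]_4) 1%:M (- 1%:M) 0.

Definition sp4 (X : mat) : Prop := X^T *m Om + Om *m X = 0.

Definition Hdiag (h : 'rV[RR]_4) : mat :=
  block_mx (diag_mx h) 0 0 (- diag_mx h).

(* Linear functionals on a, written in the basis lambda_1..lambda_4
   (coordinate j of c is the coefficient of lambda_(j+1)). *)
Definition functional := 'I_4 -> int.
Definition fval (c : functional) (h : 'rV[RR]_4) : RR :=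
  \sum_(j < 4) (c j)%:~R * h 0 j.

Definition root_space (c : functional) (X : mat) : Prop :=
  sp4 X /\ forall h, Hdiag h *m X - X *m Hdiag h = fval c h *: X.

Definition is_root (c : functional) : Prop :=
  (exists j, c j != 0) /\ exists X, root_space c X /\ X != 0.

Definition lam (i : nat) : functional := fun j => ((i == j)%N)%:Z.

Definition simple (k : nat) : functional := fun j =>
  match k with
  | 0 => lam 0 j - lam 1 j
  | 1 => lam 1 j - lam 2 j
  | 2 => lam 2 j - lam 3 j
  | _ => 2%:Z * lam 3 j
  end.

Definition positive_root (c : functional) : Prop :=
  is_root c /\ exists n : 'I_4 -> nat,
    forall j, c j = \sum_(k < 4) (n k)%:Z * simple k j.

(* Theta = {lambda1 - lambda2, lambda3 - lambda4};
   <Theta>^- = negative roots generated by Theta *)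
Definition theta_neg_root (c : functional) : Prop :=
  is_root c /\ exists n1 n3 : nat,
    forall j, c j = - ((n1%:Z) * simple 0 j + (n3%:Z) * simple 2 j).

Definition pTheta (X : mat) : Prop :=
  exists (h : 'rV[RR]_4) (s : seq (functional * mat)),
    (forall p, List.In p s ->
       (positive_root p.1 \/ theta_neg_root p.1) /\ root_space p.1 p.2) /\
    X = Hdiag h + \sum_(p <- s) p.2.

(* Ad(k) X = k X k^{-1} for k orthogonal *)
Definition Ad (k X : mat) : mat := k *m X *m k^T.

(* K = Ad(Sp(4,R) ∩ O(8)) = Ad(U(4)), the maximal compact subgroup of
   G = Int(g) = Ad(Sp(4,R)); we work with representing matrices k. *)
Definition inK (k : mat) : Prop := k^T *m k = 1%:M /\ k^T *m Om *m k = Om.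

(* K_Theta = K ∩ P_Theta, P_Theta = normalizer of p_Theta in G *)
Definition inKTheta (k : mat) : Prop :=
  inK k /\ forall X, pTheta X <-> pTheta (Ad k X).

(* Lie algebras k and k_Theta = k ∩ p_Theta; T_o F_Theta = k / k_Theta *)
Definition kk (X : mat) : Prop := sp4 X /\ X^T = - X.
Definition kTheta (X : mat) : Prop := kk X /\ pTheta X.

(* A K-invariant almost complex structure on F_Theta = K/K_Theta, given by
   its value at the origin: a linear map J on k preserving k_Theta, hence
   a linear endomorphism of k/k_Theta, with J^2 = -1 on k/k_Theta and
   commuting with the isotropy representation Ad(K_Theta) on k/k_Theta. *)
Definition K_invariant_acs (J : mat -> mat) : Prop :=
  (forall (a : RR) X Y, J (a *: X + Y) = a *: J X + J Y) /\
  (forall X, kk X -> kk (J X)) /\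
  (forall X, kTheta X -> kTheta (J X)) /\
  (forall X, kk X -> kTheta (J (J X) + X)) /\
  (forall k X, inKTheta k -> kk X -> kTheta (J (Ad k X) - Ad k (J X))).

(* Main.v *)
Require Import Defs.
From HB Require Import structures.
From mathcomp Require Import all_boot all_order all_algebra.
From mathcomp Require Import Rstruct ring lra zify.
Set Implicit Arguments. Unset Strict Implicit. Unset Printing Implicit Defensive.
Import Order.TTheory GRing.Theory Num.Theory.
Local Open Scope ring_scope.

Lemma Hdiag_diag h : Hdiag h = diag_mx (row_mx h (-h)).
Proof. rewrite diag_mx_row /Hdiag; f_equal; apply/matrixP=> i j; by rewrite !mxE mulNrn. Qed.

Lemma ord4P (i : 'I_4) : [\/ i = inord 0, i = inord 1, i = inord 2 | i = inord 3].
Proof.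
case: i => [[|[|[|[|n]]]] Hn]; [apply: Or41|apply: Or42|apply: Or43|apply: Or44|by []];
  by apply: val_inj; rewrite /= inordK.
Qed.

Lemma fvalE c h : fval c h = (c (inord 0))%:~R * h 0 (inord 0) + (c (inord 1))%:~R * h 0 (inord 1)
  + (c (inord 2))%:~R * h 0 (inord 2) + (c (inord 3))%:~R * h 0 (inord 3).
Proof.
rewrite /fval !big_ord_recr big_ord0 /= add0r.
by do ![congr (_ + _)]; congr (_ * _); try congr (_%:~R); try congr c; try congr (h 0); apply: val_inj; rewrite /= inordK.
Qed.

Lemma sp4_lin a X Y : sp4 X -> sp4 Y -> sp4 (a *: X + Y).
Proof.
rewrite /sp4 => HX HY.
rewrite linearD linearZ /= mulmxDl mulmxDr -scalemxAl -scalemxAr.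
by rewrite addrACA -scalerDr HX HY scaler0 addr0.
Qed.

Lemma kk_lin a X Y : kk X -> kk Y -> kk (a *: X + Y).
Proof.
move=> [H1 H2] [H3 H4]; split; first exact: sp4_lin.
by rewrite linearD linearZ /= H2 H4 scalerN opprD.
Qed.

Lemma root_space_lin c a X Y : root_space c X -> root_space c Y -> root_space c (a *: X + Y).
Proof.
move=> [H1 H2] [H3 H4]; split; first exact: sp4_lin.
move=> h; rewrite mulmxDr mulmxDl -scalemxAl -scalemxAr.
rewrite opprD addrACA -scalerBr H2 H4 scalerDr; congr (_ + _).
by rewrite !scalerA mulrC.
Qed.

Lemma Hdiag_lin a h1 h2 : Hdiag (a *: h1 + h2) = a *: Hdiag h1 + Hdiag h2.
Proof.
rewrite !Hdiag_diag; apply/matrixP=> i j; rewrite !mxE.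
case: splitP => k _; rewrite !mxE; case: (i == j); rewrite ?mulr0n ?mulr1n ?mulr0 ?addr0 //.
by rewrite opprD mulrN.
Qed.

Lemma Hdiag0 : Hdiag 0 = 0.
Proof. by apply/matrixP=> i j; rewrite Hdiag_diag !mxE; case: splitP => k _; rewrite !mxE ?oppr0 mul0rn. Qed.

Lemma In_cat (T : Type) (p : T) s1 s2 : List.In p (s1 ++ s2) -> List.In p s1 \/ List.In p s2.
Proof. elim: s1 => [|x s IH] /=; first by right. by case=> [->|/IH [H|H]]; [left; left|left; right|right]. Qed.

Lemma In_map (T U : Type) (f : T -> U) p s : List.In p (map f s) -> exists q, List.In q s /\ p = f q.
Proof. elim: s => [|x s IH] //=. case=> [<-|/IH [q [H1 H2]]]; first by exists x; split => //; left. by exists q; split => //; right. Qed.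

Lemma pTheta_lin a X Y : pTheta X -> pTheta Y -> pTheta (a *: X + Y).
Proof.
move=> [h1 [s1 [H1 ->]]] [h2 [s2 [H2 ->]]].
exists (a *: h1 + h2), ([seq (p.1, a *: p.2) | p <- s1] ++ s2); split.
  move=> p Hp; case: (In_cat Hp) => [H|{}Hp]; last exact: H2. have [q [Hq ->]] := In_map H.
  have [Ha Hb] := H1 q Hq; split => //=.
  by rewrite -[a *: q.2]addr0; apply: root_space_lin => //; split => [|h]; rewrite /sp4 ?trmx0 ?mulmx0 ?mul0mx ?addr0 ?scaler0 // subr0.
rewrite Hdiag_lin big_cat big_map /= scalerDr scaler_sumr.
by rewrite -!addrA; congr (_ + _); rewrite addrCA.
Qed.

Lemma pTheta0 : pTheta 0.
Proof. by exists 0, [::]; split => //; rewrite Hdiag0 big_nil addr0. Qed.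

Lemma kTheta_lin a X Y : kTheta X -> kTheta Y -> kTheta (a *: X + Y).
Proof. by move=> [H1 H2] [H3 H4]; split; [apply: kk_lin|apply: pTheta_lin]. Qed.

Lemma kk0 : kk 0.
Proof. by split; rewrite /sp4 ?trmx0 ?mulmx0 ?mul0mx ?addr0 ?oppr0. Qed.

Lemma kTheta0 : kTheta 0.
Proof. split; [exact: kk0|exact: pTheta0]. Qed.

Lemma kTheta_add X Y : kTheta X -> kTheta Y -> kTheta (X + Y).
Proof. by move=> H1 H2; rewrite -[X]scale1r; apply: kTheta_lin. Qed.

Lemma kTheta_scale a X : kTheta X -> kTheta (a *: X).
Proof. by move=> H; rewrite -[_ *: X]addr0; apply: kTheta_lin => //; apply: kTheta0. Qed.

Lemma kTheta_opp X : kTheta X -> kTheta (- X).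
Proof. by move=> H; rewrite -scaleN1r; apply: kTheta_scale. Qed.

Lemma kTheta_sub X Y : kTheta X -> kTheta Y -> kTheta (X - Y).
Proof. by move=> H1 H2; apply: kTheta_add => //; apply: kTheta_opp. Qed.

Notation blk A B C D := (block_mx A B C D : mat).
Lemma trB (A B C D : 'M[RR]_4) : (blk A B C D)^T = blk A^T C^T B^T D^T.
Proof. exact: (@tr_block_mx RR 4 4 4 4 A B C D). Qed.
Lemma mulB (A B C D A' B' C' D' : 'M[RR]_4) : blk A B C D *m blk A' B' C' D' =
  blk (A *m A' + B *m C') (A *m B' + B *m D') (C *m A' + D *m C') (C *m B' + D *m D').
Proof. exact: (@mulmx_block RR 4 4 4 4 4 4). Qed.
Lemma addB (A B C D A' B' C' D' : 'M[RR]_4) : blk A B C D + blk A' B' C' D' =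
  blk (A + A') (B + B') (C + C') (D + D').
Proof. exact: (@add_block_mx RR 4 4 4 4). Qed.
Lemma oppB (A B C D : 'M[RR]_4) : - blk A B C D = blk (- A) (- B) (- C) (- D).
Proof. exact: (@opp_block_mx RR 4 4 4 4). Qed.
Lemma scaleB a (A B C D : 'M[RR]_4) : a *: blk A B C D = blk (a *: A) (a *: B) (a *: C) (a *: D).
Proof. exact: (@scale_block_mx RR 4 4 4 4). Qed.
Lemma eqB (A B C D A' B' C' D' : 'M[RR]_4) : blk A B C D = blk A' B' C' D' ->
  [/\ A = A', B = B', C = C' & D = D'].
Proof. exact: (@eq_block_mx RR 4 4 4 4). Qed.
Lemma oneB : (1%:M : mat) = blk (1%:M : 'M[RR]_4) 0 0 1%:M.
Proof. exact: (@scalar_mx_block RR 4 4 1). Qed.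
Lemma zeroB : (0 : mat) = blk (0 : 'M[RR]_4) 0 0 0.
Proof. by rewrite block_mx0. Qed.
Lemma subK (X : mat) : X = blk (ulsubmx (X : 'M_(4+4))) (ursubmx (X : 'M_(4+4))) (dlsubmx (X : 'M_(4+4))) (drsubmx (X : 'M_(4+4))).
Proof. by rewrite submxK. Qed.

Definition Sg (e : 'rV[RR]_4) : mat := block_mx (diag_mx e) 0 0 (diag_mx e).

Section Sign.
Variable e : 'rV[RR]_4.
Hypothesis He : forall j, e 0 j * e 0 j = 1.

Lemma diag_sq : diag_mx e *m diag_mx e = 1%:M.
Proof.
apply/matrixP=> i j; rewrite mul_diag_mx !mxE.
by case: eqVneq => [->|_]; rewrite ?mulr1n ?He ?mulr0n ?mulr0.
Qed.

Lemma S_tr : (Sg e)^T = Sg e.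
Proof. by rewrite /Sg trB !tr_diag_mx !trmx0. Qed.

Lemma S_sq : Sg e *m Sg e = 1%:M.
Proof.
rewrite /Sg mulB !mulmx0 !mul0mx !addr0 !add0r diag_sq.
by rewrite [RHS]oneB.
Qed.

Lemma S_Om : Sg e *m Om = Om *m Sg e.
Proof.
rewrite /Sg /Om !mulB !mulmx0 !mul0mx !addr0 !add0r.
by rewrite mulmxN mulNmx mulmx1 mul1mx.
Qed.

Lemma S_H h : Sg e *m Hdiag h = Hdiag h *m Sg e.
Proof.
rewrite /Sg /Hdiag !mulB !mulmx0 !mul0mx !addr0 !add0r.
by rewrite mulmxN mulNmx diag_mxC.
Qed.

Lemma Ad_SE X : Ad (Sg e) X = Sg e *m X *m Sg e.
Proof. by rewrite /Ad S_tr. Qed.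

Lemma Ad_S_inv X : Ad (Sg e) (Ad (Sg e) X) = X.
Proof. by rewrite !Ad_SE !mulmxA S_sq mul1mx -mulmxA S_sq mulmx1. Qed.

Lemma Ad_S_sp4 X : sp4 X -> sp4 (Ad (Sg e) X).
Proof.
rewrite /sp4 Ad_SE => H.
rewrite !trmx_mul S_tr.
have -> : Sg e *m (X^T *m Sg e) *m Om + Om *m (Sg e *m X *m Sg e)
  = Sg e *m (X^T *m Om + Om *m X) *m Sg e.
  by rewrite mulmxDr mulmxDl !mulmxA -!mulmxA S_Om !mulmxA S_Om.
by rewrite H mulmx0 mul0mx.
Qed.

Lemma Ad_S_kk X : kk X -> kk (Ad (Sg e) X).
Proof.
move=> [H1 H2]; split; first exact: Ad_S_sp4.
by rewrite Ad_SE !trmx_mul S_tr H2 mulNmx mulmxN mulmxA.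
Qed.

Lemma Ad_S_root c X : root_space c X -> root_space c (Ad (Sg e) X).
Proof.
move=> [H1 H2]; split; first exact: Ad_S_sp4.
move=> h; rewrite Ad_SE.
have -> : Hdiag h *m (Sg e *m X *m Sg e) - Sg e *m X *m Sg e *m Hdiag h
  = Sg e *m (Hdiag h *m X - X *m Hdiag h) *m Sg e.
  by rewrite mulmxBr mulmxBl !mulmxA -!mulmxA -S_H !mulmxA S_H.
by rewrite H2 -scalemxAr !scalemxAl.
Qed.

Lemma Ad_sum (k : mat) (s : seq (functional * mat)) :
  Ad k (\sum_(p <- s) p.2) = \sum_(p <- s) Ad k p.2.
Proof.
elim: s => [|p s IH]; first by rewrite !big_nil /Ad mulmx0 mul0mx.
by rewrite !big_cons -IH /Ad mulmxDr mulmxDl.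
Qed.

Lemma Ad_add (k X Y : mat) : Ad k (X + Y) = Ad k X + Ad k Y.
Proof. by rewrite /Ad mulmxDr mulmxDl. Qed.

Lemma Ad_S_pTheta1 X : pTheta X -> pTheta (Ad (Sg e) X).
Proof.
move=> [h [s [Hs ->]]].
exists h, [seq (p.1, Ad (Sg e) p.2) | p <- s]; split.
  move=> p Hp; have [q [Hq ->]] := In_map Hp.
  have [Ha Hb] := Hs q Hq; split => //=; exact: Ad_S_root.
rewrite big_map /= -Ad_sum.
by rewrite Ad_add Ad_SE S_H -mulmxA S_sq mulmx1.
Qed.

Lemma S_inK : inKTheta (Sg e).
Proof.
split; first split.
- by rewrite S_tr S_sq.
- by rewrite S_tr S_Om -mulmxA S_sq mulmx1.
move=> X; split; first exact: Ad_S_pTheta1.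
by move=> /Ad_S_pTheta1; rewrite Ad_S_inv.
Qed.

Lemma Ad_S_kTheta X : kTheta X -> kTheta (Ad (Sg e) X).
Proof. by move=> [H1 H2]; split; [apply: Ad_S_kk|apply: Ad_S_pTheta1]. Qed.

End Sign.

Lemma kk_blk Y : kk Y -> exists A B : 'M[RR]_4, [/\ A^T = -A, B^T = B & Y = blk A B (-B) A].
Proof.
rewrite /kk /sp4 (subK Y).
move: (ulsubmx _) (ursubmx _) (dlsubmx _) (drsubmx _) => A B C D [Hs Hk].
move: Hk; rewrite trB oppB => /eqB [H1 H2 H3 H4].
move: Hs; rewrite trB /Om !mulB !mulmx0 !mul0mx !addr0 !add0r !mulmx1 !mul1mx !mulmxN !mulNmx addB zeroB.
move=> /eqB [G1 G2 G3 G4].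
rewrite mulmx1 in G1; rewrite mul1mx in G4; rewrite H1 in G2.
have hD : D = A by apply/eqP; rewrite -subr_eq0 addrC G2.
have hC : C = - B by rewrite -H2; apply/eqP; rewrite -subr_eq0 addrC G1.
have hB : B^T = B by apply/eqP; rewrite -subr_eq0 G4.
by exists A, B; split => //; rewrite hC hD.
Qed.

Definition Em (a b : nat) : 'M[RR]_4 := \matrix_(i, j) ((i == a :> nat) && (j == b :> nat))%:R.
Notation E01 := (Em 0 1).
Notation E10 := (Em 1 0).
Lemma trEm a b : (Em a b)^T = Em b a.
Proof. by apply/matrixP=> i j; rewrite !mxE andbC. Qed.
Lemma trE01 : E01^T = E10.
Proof. by apply/matrixP=> i j; rewrite !mxE andbC. Qed.
Lemma trE10 : E10^T = E01.
Proof. by rewrite -trE01 trmxK. Qed.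

Lemma trS : (E01 + E10)^T = E01 + E10.
Proof. by rewrite linearD /= trE01 trE10 addrC. Qed.
Lemma trN (M : 'M[RR]_4) : (- M)^T = - M^T.
Proof. exact: linearN. Qed.

Definition X0 : mat := blk 0 (E01 + E10) (-(E01 + E10)) 0.

Ltac simpB := rewrite ?mulmx0 ?mul0mx ?addr0 ?add0r ?mulmx1 ?mul1mx ?mulmxN ?mulNmx ?trmx0 ?oppr0 ?opprK.

Lemma X0_kk : kk X0.
Proof.
split.
  by rewrite /sp4 /X0 /Om trB !mulB addB zeroB; do 2 simpB; rewrite trN trS opprK subrr.
by rewrite /X0 trB oppB; simpB; rewrite trN trS.
Qed.

Lemma diag_Em h a b : (a < 4)%N -> (b < 4)%N ->
  diag_mx h *m Em a b - Em a b *m diag_mx h = (h 0 (inord a) - h 0 (inord b)) *: Em a b.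
Proof.
move=> Ha Hb; apply/matrixP=> i j; rewrite mul_diag_mx mul_mx_diag !mxE.
case: (eqVneq (i : nat) a) => [Hi|Hi]; case: (eqVneq (j : nat) b) => [Hj|Hj] /=;
  rewrite ?mulr0 ?mul0r ?subr0 // mulr1.
have -> : i = inord a by apply: val_inj; rewrite /= inordK.
have -> : j = inord b by apply: val_inj; rewrite /= inordK.
by rewrite mul1r mulr1.
Qed.

Lemma fval_s0 h : fval (simple 0) h = h 0 (inord 0) - h 0 (inord 1).
Proof.
rewrite fvalE /simple /lam !inordK //= ?subr0 ?sub0r. by rewrite intrN !mul0r !addr0 mulNr !mul1r.
Qed.

Definition Zp : mat := blk E01 0 0 (- E10).
Definition Zn : mat := blk E10 0 0 (- E01).
Definition cn : functional := fun j => - simple 0 j.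

Lemma fval_cn h : fval cn h = - (h 0 (inord 0) - h 0 (inord 1)).
Proof.
rewrite -fval_s0 /fval -sumrN; apply: eq_bigr => j _.
by rewrite /cn intrN mulNr.
Qed.

Lemma Zp_root : root_space (simple 0) Zp.
Proof.
split.
  rewrite /sp4 /Zp /Om trB !mulB addB zeroB; do 2 simpB; rewrite trN !trEm.
  by rewrite subrr opprK subrr.
move=> h; rewrite /Zp /Hdiag !mulB; do 2 simpB; rewrite oppB addB; simpB.
by rewrite !diag_Em // fval_s0 scaleB scaler0 scalerN -scaleNr opprB.
Qed.

Lemma Zn_root : root_space cn Zn.
Proof.
split.
  by rewrite /sp4 /Zn /Om trB !mulB addB zeroB; do 2 simpB; rewrite trN !trEm subrr opprK subrr.
move=> h; rewrite /Zn /Hdiag !mulB; do 2 simpB; rewrite oppB addB; simpB.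
by rewrite !diag_Em // fval_cn scaleB scaler0 scalerN -scaleNr !opprB.
Qed.

Lemma Em_neq0 a b : (a < 4)%N -> (b < 4)%N -> Em a b != 0.
Proof.
move=> Ha Hb; apply/negP => /eqP H.
have := congr1 (fun M : 'M[RR]_4 => M (inord a) (inord b)) H.
by rewrite !mxE !inordK // !eqxx /= => /eqP; rewrite oner_eq0.
Qed.

Lemma blk_neq0 (A B C D : 'M[RR]_4) : A != 0 -> blk A B C D != 0.
Proof. by move=> HA; apply/negP => /eqP; rewrite zeroB => /eqB [H _ _ _]; move: HA; rewrite H eqxx. Qed.

Lemma root_space0 c : root_space c 0.
Proof. by split => [|h]; rewrite /sp4 ?trmx0 ?mulmx0 ?mul0mx ?addr0 ?scaler0 // subr0. Qed.

Lemma root_space_scale c a X : root_space c X -> root_space c (a *: X).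
Proof. by move=> H; rewrite -[_ *: X]addr0; apply: root_space_lin => //; apply: root_space0. Qed.

Lemma s0_pos : positive_root (simple 0).
Proof.
split.
  split; first by exists (inord 0); rewrite /simple /lam inordK.
  by exists Zp; split; [exact: Zp_root|apply: blk_neq0; apply: Em_neq0].
exists (fun k : 'I_4 => if (k : nat) == 0%N then 1%N else 0%N) => j.
by rewrite !big_ord_recr big_ord0 /= !mul0r !addr0 add0r mul1r.
Qed.

Lemma cn_neg : theta_neg_root cn.
Proof.
split.
  split; first by exists (inord 0); rewrite /cn /simple /lam inordK.
  by exists Zn; split; [exact: Zn_root|apply: blk_neq0; apply: Em_neq0].
by exists 1%N, 0%N => j; rewrite /cn mul1r mul0r addr0.
Qed.

Definition Z : mat := Zp - Zn.

Lemma ZE : Z = blk (E01 - E10) 0 0 (E01 - E10).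
Proof. by rewrite /Z /Zp /Zn oppB addB; simpB; rewrite addrC. Qed.

Lemma Z_kTheta : kTheta Z.
Proof.
split; first split.
- have [H1 _] := Zp_root; have [H2 _] := Zn_root.
  by rewrite /Z addrC -scaleN1r; apply: sp4_lin.
- by rewrite ZE trB; simpB; rewrite oppB linearD /= trN !trEm; simpB; rewrite opprB.
exists 0, [:: (simple 0, Zp); (cn, - Zn)]; split.
  move=> p /= [<-|[<-|//]] /=; split.
  + by left; exact: s0_pos.
  + exact: Zp_root.
  + by right; exact: cn_neg.
  + by rewrite -scaleN1r; apply: root_space_scale; exact: Zn_root.
by rewrite Hdiag0 add0r !big_cons big_nil addr0.
Qed.

Definition hk (k : nat) : 'rV[RR]_4 := \row_(j < 4) ((j : nat) == k)%:R.

Lemma fval_hk c k : (k < 4)%N -> fval c (hk k) = (c (inord k))%:~R.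
Proof.
move=> Hk; rewrite fvalE !mxE !inordK //.
by case: k Hk => [|[|[|[|k]]]] //= _; rewrite ?mulr0 ?mulr1 ?addr0 ?add0r.
Qed.

Lemma root_dl c Y : root_space c Y -> (positive_root c \/ theta_neg_root c) ->
  (dlsubmx (Y : 'M_(4+4))) (inord 0) (inord 1) = 0.
Proof.
move=> [_ H] Hc; set C := dlsubmx _.
have E : forall h : 'rV[RR]_4, - (h 0 (inord 0) * C (inord 0) (inord 1)) - C (inord 0) (inord 1) * h 0 (inord 1)
    = fval c h * C (inord 0) (inord 1).
  move=> h; have := H h; rewrite (subK Y) /Hdiag !mulB; simpB; rewrite oppB addB scaleB.
  move=> /eqB [_ _ Hdl _].
  rewrite mul_diag_mx mul_mx_diag in Hdl.
  have := congr1 (fun M : 'M[RR]_4 => M (inord 0) (inord 1)) Hdl.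
  by rewrite !mxE.
move: E; move: (C (inord 0) (inord 1)) => x E.
case: (eqVneq x 0) => // HC.
have Hc0 : c (inord 0) = -1.
  have := E (hk 0); rewrite fval_hk // !mxE !inordK //= mul1r mulr0 subr0 -(mulN1r x).
  move=> H0; have {}H0 := mulIf HC H0; apply: (@intr_inj RR); by rewrite -H0 rmorphN rmorph1.
have Hc1 : c (inord 1) = -1.
  have := E (hk 1); rewrite fval_hk // !mxE !inordK //= mul0r oppr0 mulr1 sub0r -(mulN1r x).
  move=> H0; have {}H0 := mulIf HC H0; apply: (@intr_inj RR); by rewrite -H0 rmorphN rmorph1.
case: Hc => [[_ [n Hn]]|[_ [n1 [n3 Hn]]]].
- by move: (Hn (inord 0)); rewrite Hc0 !big_ord_recr big_ord0 /= /simple /lam !inordK //=.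
- move: (Hn (inord 0)) (Hn (inord 1)); rewrite Hc0 Hc1 /simple /lam !inordK //=.
  move=> A B; exfalso; lia.
Qed.

Lemma sum_zero (s : seq (functional * mat)) (F : functional * mat -> RR) :
  (forall p, List.In p s -> F p = 0) -> \sum_(p <- s) F p = 0.
Proof.
elim: s => [|q s IH] H; first by rewrite big_nil.
by rewrite big_cons H ?IH ?add0r // => [p Hp|]; [apply: H; right|left].
Qed.

Lemma split_r (i : 'I_4) : split (rshift 4 i : 'I_(4+4)) = inr i.
Proof. exact: (unsplitK (inr i)). Qed.

Lemma X0_notp : ~ pTheta X0.
Proof.
move=> [h [s [Hs E]]].
have := congr1 (fun M : mat => (dlsubmx (M : 'M_(4+4))) (inord 0) (inord 1)) E.
rewrite /= !mxE summxE sum_zero.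
  rewrite !split_r !row_mxEl !mxE !inordK //= addr0 add0r => /eqP.
  by rewrite oppr_eq0 oner_eq0.
move=> p Hp; have [Hc Hr] := Hs p Hp.
by have := root_dl Hr Hc; rewrite !mxE.
Qed.

Definition ev (k : nat) : 'rV[RR]_4 := \row_(j < 4) (if (j : nat) == k then -1 else 1).
Definition e01 : 'rV[RR]_4 := \row_(j < 4) (if (j <= 1)%N then -1 else 1).

Lemma ev_sq k j : ev k 0 j * ev k 0 j = 1.
Proof. by rewrite mxE; case: ifP => _; rewrite ?mulN1r ?opprK ?mulr1. Qed.
Lemma e01_sq j : e01 0 j * e01 0 j = 1.
Proof. by rewrite mxE; case: ifP => _; rewrite ?mulN1r ?opprK ?mulr1. Qed.

Definition DM (e : 'rV[RR]_4) (M : 'M[RR]_4) := diag_mx e *m M *m diag_mx e.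

Lemma Ad_blk e (A B C D : 'M[RR]_4) : Ad (Sg e) (blk A B C D) = blk (DM e A) (DM e B) (DM e C) (DM e D).
Proof. by rewrite /Ad /Sg trB !mulB; do 2 simpB; rewrite !tr_diag_mx. Qed.

Definition Pr (M : 'M[RR]_4) := (1/4) *: (M - DM (ev 0) M - DM (ev 1) M + DM e01 M).

Lemma Pr_skew A : A^T = - A -> Pr A = A (inord 0) (inord 1) *: (E01 - E10).
Proof.
move=> HA.
have H10 : A (inord 1) (inord 0) = - A (inord 0) (inord 1).
  by have := congr1 (fun M : 'M[RR]_4 => M (inord 0) (inord 1)) HA; rewrite !mxE.
have Hd : forall i, A i i = 0.
  move=> i; have := congr1 (fun M : 'M[RR]_4 => M i i) HA; rewrite !mxE => /eqP.
  by rewrite -subr_eq0 opprK -mulr2n mulrn_eq0 /= => /eqP.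
rewrite /Pr /DM !mul_mx_diag !mul_diag_mx; apply/matrixP => i j; rewrite !mxE.
case: (ord4P i) => ->; case: (ord4P j) => ->; rewrite !inordK //= ?Hd ?H10.
all: try lra.
Qed.

Lemma Pr_sym B : B^T = B -> Pr B = B (inord 0) (inord 1) *: (E01 + E10).
Proof.
move=> HB.
have H10 : B (inord 1) (inord 0) = B (inord 0) (inord 1).
  by have := congr1 (fun M : 'M[RR]_4 => M (inord 0) (inord 1)) HB; rewrite !mxE.
rewrite /Pr /DM !mul_mx_diag !mul_diag_mx; apply/matrixP => i j; rewrite !mxE.
case: (ord4P i) => ->; case: (ord4P j) => ->; rewrite !inordK //= ?H10.
all: try lra.
Qed.

Definition Y2 (Y : mat) := (1/4) *: (Y - Ad (Sg (ev 0)) Y - Ad (Sg (ev 1)) Y + Ad (Sg e01) Y).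

Lemma Y2E (A B : 'M[RR]_4) : A^T = - A -> B^T = B ->
  Y2 (blk A B (-B) A) = A (inord 0) (inord 1) *: Z + B (inord 0) (inord 1) *: X0.
Proof.
move=> HA HB.
have HB' : (- B)^T = - B by rewrite trN HB.
rewrite /Y2 !Ad_blk !oppB !addB scaleB.
rewrite -!/(Pr _).
rewrite (Pr_skew HA) (Pr_sym HB) (Pr_sym HB') ZE /X0 !scaleB addB; simpB.
by rewrite !scaler0 !addr0 !add0r mxE scaleNr scalerN.
Qed.

Lemma DM_S e : DM e (E01 + E10) = (e 0 (inord 0) * e 0 (inord 1)) *: (E01 + E10).
Proof.
rewrite /DM !mul_mx_diag !mul_diag_mx; apply/matrixP => i j; rewrite !mxE.
by case: (ord4P i) => ->; case: (ord4P j) => ->; rewrite !inordK //=; ring.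
Qed.

Lemma AdX0 e : Ad (Sg e) X0 = (e 0 (inord 0) * e 0 (inord 1)) *: X0.
Proof.
rewrite /X0 Ad_blk scaleB /DM; simpB; rewrite -/(DM e _) DM_S scaler0 scalerN.
by [].
Qed.

Lemma chi0 : ev 0 0 (inord 0) * ev 0 0 (inord 1) = -1.
Proof. by rewrite !mxE !inordK //= mulr1. Qed.
Lemma chi1 : ev 1 0 (inord 0) * ev 1 0 (inord 1) = -1.
Proof. by rewrite !mxE !inordK //= mul1r. Qed.
Lemma chi01 : e01 0 (inord 0) * e01 0 (inord 1) = 1.
Proof. by rewrite !mxE !inordK //= mulN1r opprK. Qed.

Theorem proposition6 : ~ exists J : 'M[Rdefinitions.R]_8 -> 'M[Rdefinitions.R]_8, K_invariant_acs J.
Proof.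
move=> [J [Jlin [Jkk [JkT [Jsq Jcomm]]]]].
have J0 : J 0 = 0.
  have H := Jlin 1 0 0; rewrite scaler0 addr0 scale1r in H.
  by apply: (@addrI _ (J 0)); rewrite addr0 -H.
have JZ : forall a X, J (a *: X) = a *: J X.
  by move=> a X; rewrite -[a *: X]addr0 Jlin J0 addr0.
have JD : forall X Y, J (X + Y) = J X + J Y.
  by move=> X Y; rewrite -[X]scale1r Jlin !scale1r.
set Y := J X0.
have EY : J X0 = Y by [].
clearbody Y.
have HYk : kk Y by rewrite -EY; apply: Jkk; exact: X0_kk.
have [A [B [HA HB HY]]] := kk_blk HYk.
have Tc : forall e : 'rV[RR]_4, (forall j, e 0 j * e 0 j = 1) ->
    kTheta ((e 0 (inord 0) * e 0 (inord 1)) *: Y - Ad (Sg e) Y).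
  move=> e He; have := Jcomm (Sg e) X0 (S_inK He) X0_kk.
  by rewrite AdX0 JZ EY.
have T0 := Tc _ (ev_sq 0); rewrite chi0 in T0.
have T1 := Tc _ (ev_sq 1); rewrite chi1 in T1.
have T01 := Tc _ e01_sq; rewrite chi01 in T01.
have Hdiff : kTheta (Y - Y2 Y).
  have -> : Y - Y2 Y = (1/4) *: (- ((-1) *: Y - Ad (Sg (ev 0)) Y) - ((-1) *: Y - Ad (Sg (ev 1)) Y)
                                 + (1 *: Y - Ad (Sg e01) Y)).
    rewrite /Y2; move: (Ad _ Y) (Ad _ Y) (Ad _ Y) => a0 a1 a2.
    by apply/matrixP => i j; rewrite !mxE; lra.
  apply: kTheta_scale; apply: kTheta_add => //.
  by apply: kTheta_sub => //; apply: kTheta_opp.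
set a := A (inord 0) (inord 1).
set b := B (inord 0) (inord 1).
have HY2 : Y2 Y = a *: Z + b *: X0 by rewrite HY Y2E.
set T := a *: Z + (Y - Y2 Y).
have HT : kTheta T by apply: kTheta_add => //; apply: kTheta_scale; exact: Z_kTheta.
have YE : Y = b *: X0 + T.
  by rewrite /T HY2; apply/matrixP => i j; rewrite !mxE; lra.
have HJT : kTheta (J T) by apply: JkT.
have Hsq := Jsq X0 X0_kk.
have E2 : J (J X0) + X0 = (b * b + 1) *: X0 + (b *: T + J T).
  rewrite EY; have -> : J Y = J (b *: X0 + T) by rewrite -YE.
  rewrite JD JZ EY; have -> : b *: Y = b *: (b *: X0 + T) by rewrite -YE.
  by apply/matrixP => i j; rewrite !mxE; ring.
have Hb : (b * b + 1 : RR) != 0.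
  have : (0 : RR) <= b * b by rewrite -expr2 sqr_ge0.
  by move=> H; apply/negP => /eqP H2; move: H; rewrite -[b * b](addrK 1) H2 sub0r oppr_ge0 ler10.
have HX : kTheta X0.
  have -> : X0 = (b * b + 1)^-1 *: ((J (J X0) + X0) - (b *: T + J T)).
    by rewrite E2 addrK scalerA mulVf // scale1r.
  apply: kTheta_scale; apply: kTheta_sub => //.
  by apply: kTheta_add => //; apply: kTheta_scale.
by apply: X0_notp; case: HX.
Qed.
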